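(* Let $H$ be a Hilbert space and $U_{ik}\in B(H)$, $i,k=1,\dots,n$, operators satisfying relations (R1)–(R5). Then for all $i,j,k,l$ with $i\neq j$ and $k\neq l$, $$U_{ik}^*U_{jl}=\omega_{ij}\omega_{lk}U_{jl}U_{ik}^*.$$
   Context: $n\ge2$, $\theta\in M_n(\mathbb R)$ skew-symmetric, $\omega_{ij}=e^{2\pi i\theta_{ij}}$. Relations, for all $i,j,k,l\in\{1,\dots,n\}$: (R1) $U_{ik}U_{jl}+\omega_{ji}U_{jk}U_{il}=\omega_{kl}U_{il}U_{jk}+\omega_{ji}\omega_{kl}U_{jl}U_{ik}$; (R2) $\sum_iU_{ik}U_{il}^*=\delta_{kl}1$; (R3) $\sum_iU_{il}^*U_{ik}=\delta_{kl}1$; (R4) $U_{jk}U_{ik}^*=0$ for $i\neq j$; (R5) $U_{ik}^*U_{jk}=0$ for $i\neq j$. *)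

(* Defs.v *)
From HB Require Import structures.
From mathcomp Require Import all_boot all_order all_algebra.
From mathcomp Require Import complex.
From mathcomp Require Import all_classical all_reals all_analysis.
Set Implicit Arguments. Unset Strict Implicit. Unset Printing Implicit Defensive.
Import Order.TTheory GRing.Theory Num.Theory.
Local Open Scope ring_scope.
Local Open Scope complex_scope.

(* omega_{ij} = e^{2 pi i theta_{ij}}, written out as cos + i sin *)
Definition omega (R : realType) (n : nat) (theta : 'M[R]_n) (i j : 'I_n) : R[i] :=
  (cos (2 * pi * theta i j)) +i* (sin (2 * pi * theta i j)).

Record is_hilbert (R : realType) (H : lmodType R[i]) (ip : H -> H -> R[i]) : Prop := {
  ip_linl : forall (a : R[i]) (x y z : H), ip (a *: x + y) z = a * ip x z + ip y z;
  ip_conj : forall x y : H, ip x y = (ip y x)^*;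
  ip_ge0 : forall x : H, 0 <= ip x x;
  ip_eq0 : forall x : H, ip x x = 0 -> x = 0;
  ip_complete : forall u : nat -> H,
      (forall e : R[i], 0 < e -> exists N : nat, forall m k : nat,
          (N <= m)%N -> (N <= k)%N -> ip (u m - u k) (u m - u k) < e) ->
      exists x : H, forall e : R[i], 0 < e -> exists N : nat, forall m : nat,
          (N <= m)%N -> ip (u m - x) (u m - x) < e
}.

Definition is_bounded_op (R : realType) (H : lmodType R[i]) (ip : H -> H -> R[i])
    (T : H -> H) : Prop :=
  (forall (a : R[i]) (x y : H), T (a *: x + y) = a *: T x + T y) /\
  exists M : R[i], forall x : H, ip (T x) (T x) <= M * ip x x.

Definition is_adjoint (R : realType) (H : lmodType R[i]) (ip : H -> H -> R[i])
    (T S : H -> H) : Prop :=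
  forall x y : H, ip (T x) y = ip x (S y).

(* Main.v *)
Require Import Defs.
From HB Require Import structures.
From mathcomp Require Import all_boot all_order all_algebra.
From mathcomp Require Import complex.
From mathcomp Require Import all_classical all_reals all_analysis.
Import Order.TTheory GRing.Theory Num.Theory.
Local Open Scope ring_scope.
Local Open Scope complex_scope.
Set Implicit Arguments. Unset Strict Implicit.

Section Aux.
Variables (R : realType) (H : lmodType R[i]).

Definition linf (f : H -> H) := forall (a : R[i]) (x y : H), f (a *: x + y) = a *: f x + f y.

Lemma lin0 f : linf f -> f 0 = 0.
Proof.
move=> hf; have := hf 1 0 0; rewrite !scale1r addr0 => h.
by apply: (@addrI _ (f 0)); rewrite addr0 -h.
Qed.

Lemma linD f : linf f -> forall x y, f (x + y) = f x + f y.
Proof. by move=> hf x y; have := hf 1 x y; rewrite !scale1r. Qed.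

Lemma linZ f : linf f -> forall a x, f (a *: x) = a *: f x.
Proof. by move=> hf a x; rewrite -(addr0 (a *: x)) hf lin0 // addr0. Qed.

Lemma lin_sum f (I : finType) (F : I -> H) : linf f ->
  f (\sum_m F m) = \sum_m f (F m).
Proof.
move=> hf; elim/big_rec2: _ => [|m a b _ <-]; [exact: lin0 | exact: linD].
Qed.

Lemma ip_linr (ip : H -> H -> R[i]) : is_hilbert ip ->
  forall b (w u v : H), ip w (b *: u + v) = b^* * ip w u + ip w v.
Proof.
move=> hH b w u v.
rewrite (ip_conj hH) (ip_linl hH) rmorphD rmorphM /=.
by rewrite -(ip_conj hH) -(ip_conj hH).
Qed.

Lemma adj_lin (ip : H -> H -> R[i]) T S : is_hilbert ip -> is_adjoint ip T S -> linf S.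
Proof.
move=> hH hA a y z.
have L := ip_linr hH.
set d := S (a *: y + z) - (a *: S y + S z).
have hw w : ip w d = 0.
  rewrite /d -scaleN1r addrC L L -!hA L.
  by rewrite rmorphN rmorph1 mulN1r addNr.
apply/subr0_eq; apply: (ip_eq0 hH); exact: hw.
Qed.

Lemma double0 (t : H) : t + 1 *: t = 0 -> t = 0.
Proof.
rewrite scale1r => h.
have : (2%:R : R[i]) *: t = 0 by rewrite scaler_nat mulr2n.
move=> h2; rewrite -[t]scale1r -(@mulVf _ 2%:R) ?pnatr_eq0 //.
by rewrite -scalerA h2 scaler0.
Qed.

End Aux.

Theorem proposition3p17 (R : realType) (n : nat) (theta : 'M[R]_n)
    (H : lmodType R[i]) (ip : H -> H -> R[i])
    (U Us : 'I_n -> 'I_n -> H -> H) :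
  (2 <= n)%N ->
  theta^T = - theta ->
  is_hilbert ip ->
  (forall i k, is_bounded_op ip (U i k)) ->
  (forall i k, is_adjoint ip (U i k) (Us i k)) ->
  (* (R1) *)
  (forall i j k l (x : H),
      U i k (U j l x) + omega theta j i *: U j k (U i l x)
      = omega theta k l *: U i l (U j k x)
        + (omega theta j i * omega theta k l) *: U j l (U i k x)) ->
  (* (R2) *)
  (forall k l (x : H), \sum_i U i k (Us i l x) = (k == l)%:R *: x) ->
  (* (R3) *)
  (forall k l (x : H), \sum_i Us i l (U i k x) = (k == l)%:R *: x) ->
  (* (R4) *)
  (forall i j k (x : H), i != j -> U j k (Us i k x) = 0) ->
  (* (R5) *)
  (forall i j k (x : H), i != j -> Us i k (U j k x) = 0) ->
  forall i j k l, i != j -> k != l ->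
    forall x : H,
      Us i k (U j l x) = (omega theta i j * omega theta l k) *: U j l (Us i k x).
Proof.
move=> n2 skew hH Ub Uadj R1 R2 R3 R4 R5 i j k l ij kl x.
have Ul a b : linf (U a b) := (Ub a b).1.
have Usl a b : linf (Us a b) := adj_lin hH (Uadj a b).
have wjj m : omega theta m m = 1.
  have : theta m m = 0.
    have := congr1 (fun M : 'M[R]_n => M m m) skew.
    rewrite !mxE => /eqP; rewrite -subr_eq0 opprK -mulr2n => /eqP.
    by move/eqP; rewrite mulrn_eq0 /= => /eqP.
  by move=> h; rewrite /omega h mulr0 cos0 sin0.
have h1 m : m != i -> Us i k (U j l (U m k (Us m k x))) = 0.
  move=> mi; have E := congr1 (Us i k) (R1 j m l k (Us m k x)).
  have im : i != m by rewrite eq_sym.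
  rewrite !(linD (Usl _ _)) !(linZ (Usl _ _)) in E.
  rewrite (R5 i j k _ ij) (R5 i m k _ im) ?scaler0 ?addr0 in E.
  case: (eqVneq m j) => [mj|mj].
    subst m; rewrite wjj in E; exact: double0.
  by move: E; rewrite (R4 m j k x mj) (lin0 (Ul _ _)) (lin0 (Usl _ _)) scaler0 addr0.
have h2 m : m != i -> Us m k (U m k (U j l (Us i k x))) = 0.
  move=> mi; have E := R1 m j k l (Us i k x).
  have im : i != m by rewrite eq_sym.
  rewrite (R4 i j k x ij) (R4 i m k x im) !(lin0 (Ul _ _)) !scaler0 addr0 in E.
  have {E} := congr1 (Us m k) E.
  rewrite (lin0 (Usl _ _)) (linD (Usl _ _)) (linZ (Usl _ _)).
  case: (eqVneq m j) => [mj|mj].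
    subst m; rewrite wjj; exact: double0.
  by rewrite (R5 m j k _ mj) scaler0 addr0.
have h3 : Us i k (U j l (U i k (Us i k x))) =
   (omega theta i j * omega theta l k) *: Us i k (U i k (U j l (Us i k x))).
  have E := congr1 (Us i k) (R1 j i l k (Us i k x)).
  rewrite (R4 i j k x ij) (lin0 (Ul _ _)) scaler0 addr0 in E.
  rewrite E.
  by rewrite (linD (Usl _ _)) !(linZ (Usl _ _)) (R5 i j k _ ij) scaler0 add0r.
have ex : x = \sum_m U m k (Us m k x) by rewrite R2 eqxx scale1r.
rewrite {1}ex (lin_sum _ (Ul _ _)) (lin_sum _ (Usl _ _)) (bigD1 i) //= big1;
  last by move=> m mi; exact: h1.
rewrite addr0 h3.
have ey : Us i k (U i k (U j l (Us i k x))) = U j l (Us i k x).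
  have E := R3 k k (U j l (Us i k x)).
  rewrite eqxx scale1r (bigD1 i) //= in E.
  rewrite big1 in E; last by move=> m mi; exact: h2.
  by rewrite addr0 in E.
by rewrite ey.
Qed.
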